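(* Let $\tilde t$ be a Linda template and $\tilde b$ a Linda datum (a finite sequence of names). Then ${\sf Match}(\tilde t;\tilde b)=\sigma$ if and only if $\{{\sf patt}(\tilde t)\,\|\,{\sf patb}(\tilde b)\}=(\sigma\cup\{\mathsf c/x\},\{\mathsf c/x_0,\ldots,\mathsf c/x_n\})$, where $\{x_0,\ldots,x_n\}={\sf bn}({\sf patb}(\tilde b))$, ${\sf dom}(\sigma)\uplus\{x\}={\sf bn}({\sf patt}(\tilde t))$, and $\sigma$ maps names to names.
   Context: CPC patterns over a countable set of names: $p ::= \lambda x \mid x \mid \ulcorner x\urcorner \mid p\bullet p$ (binding, variable, protected name, compound; $\bullet$ left associative). ${\sf bn}(p)$ is the set of binding names; communicable patterns contain no protected or binding names. Unification $\{p\|q\}$: $\{x\|x\}=\{x\|\ulcorner x\urcorner\}=\{\ulcorner x\urcorner\|x\}=\{\ulcorner x\urcorner\|\ulcorner x\urcorner\}=(\{\},\{\})$; $\{\lambda x\|q\}=(\{q/x\},\{\})$ and $\{q\|\lambda x\}=(\{\},\{q/x\})$ if $q$ communicable; $\{p_1\bullet p_2\|q_1\bullet q_2\}=(\sigma_1\cup\sigma_2,\rho_1\cup\rho_2)$ if $\{p_i\|q_i\}=(\sigma_i,\rho_i)$; undefined otherwise. Linda templates are sequences $\tilde t=t_1,\ldots,t_k$ of template fields $t::=\lambda x\mid\ulcorner b\urcorner$ ($b$ a name; input variables pairwise distinct), data are sequences of names $\tilde b$. Matching: ${\sf Match}(;)=\{\}$, ${\sf Match}(\ulcorner b\urcorner;b)=\{\}$,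 ${\sf Match}(\lambda x;b)=\{b/x\}$, ${\sf Match}(t,\tilde t;b,\tilde b)=\sigma_1\uplus\sigma_2$ if ${\sf Match}(t;b)=\sigma_1$ and ${\sf Match}(\tilde t;\tilde b)=\sigma_2$ (disjoint union), undefined otherwise. Fix a name $\mathsf c$. The translations into CPC patterns are: ${\sf patt}()=\lambda x\bullet\mathsf c$ with $x$ fresh; ${\sf patt}(t,\tilde t)=t\bullet\mathsf c\bullet{\sf patt}(\tilde t)$ (a template field $\lambda x$ or $\ulcorner b\urcorner$ read as the CPC pattern of the same form, and ${\sf patt}(\tilde t)$ a single sub-pattern); ${\sf patb}()=\mathsf c\bullet\lambda x$ with $x$ fresh; ${\sf patb}(b,\tilde b)=b\bullet\lambda x\bullet{\sf patb}(\tilde b)$ with $x$ fresh. In the claim, $x$ denotes the fresh binding name introduced by the clause ${\sf patt}()$. *)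

(* Defs.v *)
From mathcomp Require Import all_boot.
Set Implicit Arguments. Unset Strict Implicit. Unset Printing Implicit Defensive.

Definition name := nat.

(** CPC patterns: p ::= \x | x | 'x' | p . p *)
Inductive pat : Type :=
| PBind : name -> pat
| PVar  : name -> pat
| PProt : name -> pat
| PComp : pat -> pat -> pat.

Fixpoint bn (p : pat) : seq name :=
  match p with
  | PBind x => [:: x]
  | PVar _ | PProt _ => [::]
  | PComp p q => bn p ++ bn q
  end.

Fixpoint communicable (p : pat) : Prop :=
  match p with
  | PVar _ => True
  | PBind _ | PProt _ => False
  | PComp p q => communicable p /\ communicable q
  end.

(** substitutions: finite partial maps from names, represented as functions
    into option; equality of substitutions is extensional equality of these. *)
Definition subst (A : Type) := name -> option A.
Definition sempty {A} : subst A := fun _ => None.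
Definition single {A} (x : name) (v : A) : subst A :=
  fun n => if n == x then Some v else None.
Definition dom {A} (s : subst A) (n : name) : Prop := s n <> None.

(** union of two substitutions viewed as sets of pairs: defined iff they agree
    on their common domain; [sunion_rel s1 s2 s] means s = s1 \cup s2. *)
Definition sunion {A} (s1 s2 : subst A) : subst A :=
  fun n => if s1 n is Some v then Some v else s2 n.
Definition sunion_rel {A} (s1 s2 s : subst A) : Prop :=
  (forall n v w, s1 n = Some v -> s2 n = Some w -> v = w) /\ s = sunion s1 s2.

(** CPC unification {p || q} = (sigma, rho), as a (deterministic) relation *)
Inductive Unify : pat -> pat -> subst pat -> subst pat -> Prop :=
| U_VV x : Unify (PVar x) (PVar x) sempty sempty
| U_VP x : Unify (PVar x) (PProt x) sempty sempty
| U_PV x : Unify (PProt x) (PVar x) sempty sempty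
| U_PP x : Unify (PProt x) (PProt x) sempty sempty
| U_BL x q : communicable q -> Unify (PBind x) q (single x q) sempty
| U_BR x q : communicable q -> Unify q (PBind x) sempty (single x q)
| U_C p1 p2 q1 q2 s1 s2 r1 r2 s r :
    Unify p1 q1 s1 r1 -> Unify p2 q2 s2 r2 ->
    sunion_rel s1 s2 s -> sunion_rel r1 r2 r ->
    Unify (PComp p1 p2) (PComp q1 q2) s r.

Inductive tfield : Type :=
| TBind : name -> tfield
| TProt : name -> tfield.

Definition template := seq tfield.
Definition datum := seq name.

Definition tvars (t : tfield) : seq name :=
  match t with TBind x => [:: x] | TProt _ => [::] end.
Definition tnames (t : tfield) : seq name :=
  match t with TBind x | TProt x => [:: x] end.
Definition input_vars (ts : template) : seq name := flatten (map tvars ts).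
Definition template_names (ts : template) : seq name := flatten (map tnames ts).

Definition sdunion_rel (s1 s2 s : subst name) : Prop :=
  (forall n, dom s1 n -> ~ dom s2 n) /\ s = sunion s1 s2.

Inductive Match : template -> datum -> subst name -> Prop :=
| M_nil : Match [::] [::] sempty
| M_cons t ts b bs s1 s2 s :
    Match1 t b s1 -> Match ts bs s2 -> sdunion_rel s1 s2 s ->
    Match (t :: ts) (b :: bs) s
with Match1 : tfield -> name -> subst name -> Prop :=
| M1_prot b : Match1 (TProt b) b sempty
| M1_bind x b : Match1 (TBind x) b (single x b).

(** the translations; the fresh binding names are passed explicitly:
    [patt c x ts] uses x as the fresh name of the clause patt(),
    [patb c xs bs] uses the names of xs (in order) as its fresh names. *)
Definition pat_of_field (t : tfield) : pat :=
  match t with TBind x => PBind x | TProt b => PProt b end.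

Fixpoint patt (c x : name) (ts : template) : pat :=
  match ts with
  | [::] => PComp (PBind x) (PVar c)
  | t :: ts' => PComp (PComp (pat_of_field t) (PVar c)) (patt c x ts')
  end.

Fixpoint patb (c : name) (xs : seq name) (bs : datum) : pat :=
  match bs, xs with
  | [::], x :: _ => PComp (PVar c) (PBind x)
  | [::], [::] => PComp (PVar c) (PBind 0) (* unused: size xs = size bs + 1 *)
  | b :: bs', x :: xs' => PComp (PComp (PVar b) (PBind x)) (patb c xs' bs')
  | b :: bs', [::] => PComp (PComp (PVar b) (PBind 0)) (patb c [::] bs') (* unused *)
  end.

Definition lift_subst (s : subst name) : subst pat := fun n => omap PVar (s n).

(* Main.v *)
Require Import Defs.
From mathcomp Require Import all_boot.
From Stdlib Require Import FunctionalExtensionality.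

Lemma bn_patt c x ts : bn (patt c x ts) = input_vars ts ++ [:: x].
Proof. by elim: ts => [|[z|b] ts IH] //=; rewrite IH. Qed.

Lemma iv_tn n ts : n \in input_vars ts -> n \in template_names ts.
Proof.
elim: ts => [|[z|b] ts IH] //=; rewrite ?inE.
  by case/orP=> [->|/IH ->] //; rewrite orbT.
by move/IH => ->; rewrite orbT.
Qed.

Lemma dom_match ts bs s : Match ts bs s -> forall n, dom s n <-> n \in input_vars ts.
Proof.
elim: ts bs s => [|t ts IH] bs s H n;
  inversion H as [|? ? b bs' s1 s2 ? Hm1 Hm Hsd]; subst.
  by rewrite /dom /sempty; split.
case: Hsd => _ ->. have := IH _ _ Hm n.
rewrite /dom /sunion; inversion Hm1; subst => /= E.
  by rewrite /sempty; exact: E.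
rewrite inE /single; case: eqP => [->|ne] /=; first by split=> // _ [].
by exact: E.
Qed.

Lemma fwd c x xs ts bs s : x \notin template_names ts -> size xs = (size bs).+1 ->
  Match ts bs s ->
  Unify (patt c x ts) (patb c xs bs) (sunion (lift_subst s) (single x (PVar c)))
    (fun n => if n \in bn (patb c xs bs) then Some (PVar c) else None).
Proof.
elim: ts bs xs s => [|t ts IH] bs xs s Hx Hs H;
  inversion H as [|? ? b bs0 s1 s2 ? Hm1 Hm Hsd]; subst.
  case: xs Hs => [|y [|]] //= _.
  apply: (U_C (s1 := single x (PVar c)) (s2 := sempty) (r1 := sempty)
     (r2 := single y (PVar c))); try by constructor.
    split; first by [].
    apply: functional_extensionality => n.
    by rewrite /sunion /single /sempty /lift_subst; case: eqP.
  split=> // ; apply: functional_extensionality => n.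
  by rewrite /sunion /single /sempty inE.
case: xs Hs => [|y xs] //= [Hs].
case: Hsd => Hdisj ->.
have Hx' : x \notin template_names ts by move: Hx => /=; rewrite mem_cat negb_or => /andP[].
have IH' := IH _ _ _ Hx' Hs Hm.
inversion Hm1 as [|x0 b1]; subst => /=.
- apply: (U_C (s1 := sunion sempty sempty) (s2 := sunion (lift_subst s2) (single x (PVar c)))
    (r1 := sunion sempty (single y (PVar c)))
    (r2 := fun n => if n \in bn (patb c xs bs0) then Some (PVar c) else None)) => //.
  + apply: (U_C (s1 := sempty) (s2 := sempty) (r1 := sempty) (r2 := single y (PVar c))) => //;
      by constructor.
  + split.
      move=> n v w; rewrite /sunion /sempty /single.
      by case: eqP => // _ [<-]; case: ifP => // _ [<-].
    apply: functional_extensionality => n.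
    by rewrite /sunion /sempty /single inE; case: eqP.
- apply: (U_C (s1 := sunion (single x0 (PVar b)) sempty)
    (s2 := sunion (lift_subst s2) (single x (PVar c)))
    (r1 := sunion sempty (single y (PVar c)))
    (r2 := fun n => if n \in bn (patb c xs bs0) then Some (PVar c) else None)) => //.
  + apply: (U_C (s1 := single x0 (PVar b)) (s2 := sempty) (r1 := sempty) (r2 := single y (PVar c))) => //;
      by constructor.
  + split.
      move=> n v w; rewrite /sunion /single /sempty /lift_subst.
      case: eqP => // -> _.
      have Hd : dom (single x0 b) x0 by rewrite /dom /single eqxx.
      have := Hdisj _ Hd; rewrite /dom.
      case: (s2 x0) => //= [? []//|].
      case: eqP => // Ex; move: Hx; rewrite /= inE Ex eqxx //.
    apply: functional_extensionality => n.
    by rewrite /sunion /sempty /lift_subst /single; case: eqP.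
  + split.
      move=> n v w; rewrite /sunion /sempty /single.
      by case: eqP => // _ [<-]; case: ifP => // _ [<-].
    apply: functional_extensionality => n.
    by rewrite /sunion /sempty /single inE; case: eqP.
Qed.

Lemma bwd c x xs ts bs s r : uniq (input_vars ts) -> size xs = (size bs).+1 ->
  Unify (patt c x ts) (patb c xs bs) s r ->
  exists s', Match ts bs s' /\ s = sunion (lift_subst s') (single x (PVar c)).
Proof.
elim: ts bs xs s r => [|t ts IH] [|b bs] [|y xs] s r //= Hu [Hs] H;
  inversion H as [| | | | | |? ? ? ? s1 s2 r1 r2 ? ? H1 H2 Hsu Hru]; subst.
- exists sempty; split; first by constructor.
  inversion H1; subst; inversion H2; subst.
  case: Hsu => _ ->; apply: functional_extensionality => n.
  by rewrite /sunion /single /sempty /lift_subst /=; case: eqP.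
- inversion H1; subst. by case: H3.
- inversion H1.
- have Hu' : uniq (input_vars ts).
    by move: (Hu); case: (t) => [z|z] //= /andP[].
  have [s2' [Hm Es2]] := IH _ _ _ _ Hu' Hs H2.
  inversion H1 as [| | | | | |? ? ? ? fs ss fr sr ? ? Hf Hc Hsu1 _]; subst.
  inversion Hc; subst.
  clear H H1; case: t Hu Hf => [z|b'] Hu Hf /=; inversion Hf; subst.
  + exists (sunion (single z b) s2'); split.
      apply: M_cons (M1_bind z b) (Hm) _; split=> // n.
      rewrite /dom /single; case: eqP => // -> _.
      move=> /(proj1 (@dom_match _ _ _ Hm z)).
      by move: Hu => /= /andP[/negP].
    case: Hsu => _ ->; case: Hsu1 => _ ->; apply: functional_extensionality => n.
    by rewrite /sunion /single /sempty /lift_subst /=; case: eqP.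
  + exists (sunion sempty s2'); split.
      apply: M_cons (M1_prot _) (Hm) _; split=> // n.
    case: Hsu => _ ->; case: Hsu1 => _ ->; apply: functional_extensionality => n.
    by rewrite /sunion /single /sempty /lift_subst /=.
Qed.

Theorem lemma4p6 (c x : name) (xs : seq name) (ts : template) (bs : datum)
    (sigma : subst name) :
  (* well-formed Linda template: input variables pairwise distinct *)
  uniq (input_vars ts) ->
  (* freshness of the names introduced by patt() and patb(_) *)
  x \notin template_names ts -> x \notin bs -> x != c ->
  uniq xs -> size xs = (size bs).+1 ->
  (forall y, y \in xs -> [/\ y \notin template_names ts, y \notin bs, y != c & y != x]) ->
  Match ts bs sigma <->
  (Unify (patt c x ts) (patb c xs bs)
         (sunion (lift_subst sigma) (single x (PVar c)))
         (fun n => if n \in bn (patb c xs bs) then Some (PVar c) else None)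
   /\ ~ dom sigma x
   /\ (forall n, dom sigma n \/ n = x <-> n \in bn (patt c x ts))).
Proof.
move=> Hu Hx _ _ _ Hs _.
have Hxi : x \notin input_vars ts by apply/negP => /iv_tn; apply/negP.
split.
  move=> Hm; split; first exact: fwd.
  split; first by move/(proj1 (@dom_match _ _ _ Hm x)); apply/negP.
  move=> n; rewrite bn_patt mem_cat inE; have [D1 D2] := @dom_match _ _ _ Hm n.
  split; first by case=> [/D1 ->|->]; rewrite ?eqxx ?orbT.
  by case/orP => [/D2|/eqP ->]; [left|right].
case=> HU [Hnx _].
have [s' [Hm E]] := @bwd _ _ _ _ _ _ _ Hu Hs HU.
have Hs'x : ~ dom s' x by move/(proj1 (@dom_match _ _ _ Hm x)); apply/negP.
suff -> : sigma = s' by [].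
apply: functional_extensionality => n.
have := congr1 (fun f => f n) E; rewrite /sunion /single /lift_subst.
case: eqP => [->|_]; last by case: (sigma n); case: (s' n) => //= ? ? [->].
move: Hnx Hs'x; rewrite /dom.
case: (sigma x) => [a H|_]; first by case: H.
by case: (s' x) => [a H|_] //; case: H.
Qed.
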